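(* Let $D$ be an integral domain with quotient field $K$, $\star$ a semistar operation on $D$, and let $\{(T_\lambda,\ast_\lambda):\lambda\in\Lambda\}$ be a direct family (as defined in the context) with $T=\bigcup_\lambda T_\lambda$. For $E\in\overline{\mathbf F}(T)$ set $E^{\ast^\Lambda}:=\bigcup_{\lambda\in\Lambda}E^{(\ast_\lambda)_f}$. Then: (1) $\ast^\Lambda$ is a semistar operation of finite type on $T$; (2) if $T_\lambda$ is $(\star,\ast_\lambda)$-linked to $D$ for every $\lambda\in\Lambda$, then $T$ is $(\star,\ast^\Lambda)$-linked to $D$; (3) if $T_\lambda$ is $(\star,t_{T_\lambda})$-linked to $D$ for every $\lambda\in\Lambda$, then $T$ is $(\star,t_T)$-linked to $D$.
   Context: Let $D$ be an integral domain with quotient field $K$. $\overline{\mathbf F}(D)$ denotes the set of all nonzero $D$-submodules of $K$ and $\mathbf f(D)$ the set of nonzero finitely generated $D$-submodules of $K$. A semistar operation on $D$ is a map $\star:\overline{\mathbf F}(D)\to\overline{\mathbf F}(D)$, $E\mapsto E^\star$, such that for all $0\ne x\in K$ and $E,F\in\overline{\mathbf F}(D)$: (1) $(xE)^\star=xE^\star$; (2) $E\subseteq F\Rightarrow E^\star\subseteq F^\star$; (3) $E\subseteq E^\star$ and $(E^\star)^\star=E^\star$. $\star_f$ is defined by $E^{\star_f}=\bigcup\{F^\star:F\in\mathbf f(D),F\subseteq E\}$; $\star$ is of finite type if $\star=\star_f$. An overring of $D$ is a ring $T$ with $D\subseteq T\subseteq K$; semistar operations on $T$ are defined likewise. For an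 overring $T$, $v_T$ is the semistar operation $E\mapsto (T:_K(T:_KE))$ on $T$ and $t_T:=(v_T)_f$. If $\star'$ is a semistar operation on an overring $T$, $T$ is $(\star,\star')$-linked to $D$ if for every nonzero finitely generated ideal $F\subseteq D$ with $F^\star=D^\star$ one has $(FT)^{\star'}=T^{\star'}$. A direct family: $\{T_\lambda:\lambda\in\Lambda\}$ is a family of overrings of $D$, directed under inclusion (for any $\alpha,\beta$ there is $\gamma$ with $T_\alpha,T_\beta\subseteq T_\gamma$), $\Lambda$ preordered by $\lambda'\le\lambda''$ iff $T_{\lambda'}\subseteq T_{\lambda''}$, $T=\bigcup_\lambda T_\lambda$, and $\ast_\lambda$ is a semistar operation on $T_\lambda$ for each $\lambda$ such that whenever $T_{\lambda_1}\subseteq T_{\lambda_2}$ and $H\in\mathbf f(T_{\lambda_1})$, one has $H^{\ast_{\lambda_1}}\subseteq (HT_{\lambda_2})^{\ast_{\lambda_2}}$. *)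

(* Defs.v *)
From mathcomp Require Import all_boot all_algebra.
Set Implicit Arguments. Unset Strict Implicit. Unset Printing Implicit Defensive.
Import GRing.Theory.
Local Open Scope ring_scope.

Section SemistarDefs.
Variable K : fieldType.
Implicit Types (R D T E F H : K -> Prop) (x y : K).

Definition ssub E F : Prop := forall x, E x -> F x.
Definition sseq E F : Prop := forall x, E x <-> F x.

Definition is_subring R : Prop :=
  [/\ R 0, R 1, (forall x y, R x -> R y -> R (x - y)) &
      (forall x y, R x -> R y -> R (x * y))].

Definition is_quotient_field D : Prop :=
  forall x, exists a b, [/\ D a, D b, b != 0 & x = a / b].

Definition overring D T : Prop := is_subring T /\ ssub D T.

Definition is_module R E : Prop :=
  [/\ E 0, (forall x y, E x -> E y -> E (x + y)) &
      (forall r x, R r -> E x -> E (r * x))].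

Definition Fbar R E : Prop := is_module R E /\ exists x, x != 0 /\ E x.

Fixpoint gen R (s : seq K) : K -> Prop :=
  match s with
  | [::] => fun x => x = 0
  | a :: s' => fun x => exists r y, [/\ R r, gen R s' y & x = r * a + y]
  end.

Definition fgmod R E : Prop := Fbar R E /\ exists s, sseq E (gen R s).

(* the R-submodule generated by E, i.e. E R *)
Definition ext R E : K -> Prop :=
  fun x => exists s : seq K, (forall y, y \in s -> E y) /\ gen R s x.

Definition scale x E : K -> Prop := fun y => exists e, E e /\ y = x * e.

Definition semistar_op := (K -> Prop) -> (K -> Prop).

Definition is_semistar R (st : semistar_op) : Prop :=
  [/\ (forall E, Fbar R E -> Fbar R (st E)),
      (forall x E, x != 0 -> Fbar R E -> sseq (st (scale x E)) (scale x (st E))),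
      (forall E F, Fbar R E -> Fbar R F -> ssub E F -> ssub (st E) (st F)),
      (forall E, Fbar R E -> ssub E (st E)) &
      (forall E, Fbar R E -> sseq (st (st E)) (st E))].

Definition finite_part R (st : semistar_op) : semistar_op :=
  fun E x => exists F, [/\ fgmod R F, ssub F E & st F x].

Definition finite_type R (st : semistar_op) : Prop :=
  forall E, Fbar R E -> sseq (st E) (finite_part R st E).

Definition colon T E : K -> Prop := fun x => forall e, E e -> T (x * e).

Definition v_op T : semistar_op := fun E => colon T (colon T E).
Definition t_op T : semistar_op := finite_part T (v_op T).

Definition linked D (st : semistar_op) T (st' : semistar_op) : Prop :=
  forall F, fgmod D F -> ssub F D -> sseq (st F) (st D) ->
    sseq (st' (ext T F)) (st' T).

Definition direct_family D (L : Type) (Tl : L -> K -> Prop)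
    (stl : L -> semistar_op) : Prop :=
  [/\ (forall l, overring D (Tl l)),
      (forall l, is_semistar (Tl l) (stl l)),
      (forall a b, exists c, ssub (Tl a) (Tl c) /\ ssub (Tl b) (Tl c)) &
      (forall l1 l2 H, ssub (Tl l1) (Tl l2) -> fgmod (Tl l1) H ->
         ssub (stl l1 H) (stl l2 (ext (Tl l2) H)))].

Definition union_ring (L : Type) (Tl : L -> K -> Prop) : K -> Prop :=
  fun x => exists l, Tl l x.

Definition star_Lambda (L : Type) (Tl : L -> K -> Prop)
    (stl : L -> semistar_op) : semistar_op :=
  fun E x => exists l, finite_part (Tl l) (stl l) E x.

End SemistarDefs.

(* Main.v *)
Require Import Defs.
From mathcomp Require Import all_boot all_algebra.
From mathcomp Require Import ring.
From Stdlib Require Import FunctionalExtensionality PropExtensionality.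
Set Implicit Arguments. Unset Strict Implicit.
Import GRing.Theory.
Local Open Scope ring_scope.

Lemma sseq_eq (K : fieldType) (E F : K -> Prop) : sseq E F -> E = F.
Proof.
move=> h; apply: functional_extensionality => x; apply: propositional_extensionality; exact: h.
Qed.

Lemma sr_add (K : fieldType) (R : K -> Prop) x y :
  is_subring R -> R x -> R y -> R (x + y).
Proof.
move=> [h0 h1 hs hm] Rx Ry. have -> : x + y = x - (0 - y) by ring.
by apply: (hs) => //; apply: (hs).
Qed.

Lemma sr_mod (K : fieldType) (R : K -> Prop) : is_subring R -> is_module R R.
Proof.
move=> hR; have [h0 h1 hs hm] := hR; split => //.
- by move=> x y; apply: sr_add.
Qed.

Lemma sr_Fbar (K : fieldType) (R : K -> Prop) : is_subring R -> Fbar R R.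
Proof.
move=> hR; split; first exact: sr_mod.
exists 1; split; [exact: oner_neq0 | by case: hR].
Qed.

Lemma zcolon_mod (K : fieldType) (R : K -> Prop) z :
  is_subring R -> is_module R (fun e => R (z * e)).
Proof.
move=> hR; have [h0 h1 hs hm] := hR; split.
- by rewrite mulr0.
- by move=> x y hx hy; rewrite mulrDr; apply: sr_add.
- move=> r x hr hx; have -> : z * (r * x) = r * (z * x) by ring.
  exact: hm.
Qed.

Lemma gen_mod (K : fieldType) (R : K -> Prop) s :
  is_subring R -> is_module R (gen R s).
Proof.
move=> hR; have [h0 h1 hs hm] := hR.
elim: s => [|a s [IH0 IHa IHm]] /=.
- split=> //.
  + by move=> x y -> ->; rewrite addr0.
  + by move=> r x _ ->; rewrite mulr0.
- split.
  + exists 0, 0; split=> //; by rewrite mul0r addr0.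
  + move=> x y [r1 [y1 [Hr1 Hy1 ->]]] [r2 [y2 [Hr2 Hy2 ->]]].
    exists (r1 + r2), (y1 + y2); split; [exact: sr_add | exact: IHa | ring].
  + move=> r x Hr [r1 [y1 [Hr1 Hy1 ->]]].
    exists (r * r1), (r * y1); split; [exact: hm | exact: IHm | ring].
Qed.

Lemma gen_in (K : fieldType) (R : K -> Prop) s a :
  is_subring R -> a \in s -> gen R s a.
Proof.
move=> hR; have [h0 h1 hs hm] := hR.
elim: s => [|b s IH] //=. rewrite in_cons => /orP [/eqP ->| ha].
- exists 1, 0; split => //; first by case: (gen_mod s hR).
  by rewrite mul1r addr0.
- exists 0, a; split => //; [exact: IH | by rewrite mul0r add0r].
Qed.

Lemma gen_min (K : fieldType) (R : K -> Prop) s M :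
  is_module R M -> (forall y, y \in s -> M y) -> ssub (gen R s) M.
Proof.
move=> hM; have [m0 ma mm] := hM.
elim: s => [|a s IH] hs x /=; first by move=> ->.
move=> [r [y [Hr Hy ->]]]; apply: ma.
- by apply: mm => //; apply: hs; rewrite mem_head.
- by apply: IH => // z hz; apply: hs; rewrite in_cons hz orbT.
Qed.

Lemma gen_mono (K : fieldType) (R R' : K -> Prop) s :
  ssub R R' -> ssub (gen R s) (gen R' s).
Proof.
move=> hR; elim: s => [|a s IH] x //=.
move=> [r [y [Hr Hy ->]]]; exists r, y; split => //; [exact: hR | exact: IH].
Qed.

Lemma module_mono (K : fieldType) (R R' E : K -> Prop) :
  ssub R' R -> is_module R E -> is_module R' E.
Proof. by move=> hs [h0 ha hm]; split => // r x hr; apply: hm; apply: hs. Qed.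

Lemma gen_catl (K : fieldType) (R : K -> Prop) s1 s2 :
  is_subring R -> ssub (gen R s1) (gen R (s1 ++ s2)).
Proof.
move=> hR; apply: gen_min; first exact: gen_mod.
by move=> y hy; apply: gen_in => //; rewrite mem_cat hy.
Qed.

Lemma gen_catr (K : fieldType) (R : K -> Prop) s1 s2 :
  is_subring R -> ssub (gen R s2) (gen R (s1 ++ s2)).
Proof.
move=> hR; apply: gen_min; first exact: gen_mod.
by move=> y hy; apply: gen_in => //; rewrite mem_cat hy orbT.
Qed.

Lemma ext_mod (K : fieldType) (R E : K -> Prop) :
  is_subring R -> is_module R (ext R E).
Proof.
move=> hR; split.
- by exists [::].
- move=> x y [s1 [h1 g1]] [s2 [h2 g2]]; exists (s1 ++ s2); split.
  + by move=> y'; rewrite mem_cat => /orP [] ?; auto.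
  + by case: (gen_mod (s1 ++ s2) hR) => _ ha _; apply: ha;
      [apply: gen_catl | apply: gen_catr].
- move=> r x hr [s [hs g]]; exists s; split => //.
  by case: (gen_mod s hR) => _ _ hm; apply: hm.
Qed.

Lemma ext_min (K : fieldType) (R E M : K -> Prop) :
  is_module R M -> ssub E M -> ssub (ext R E) M.
Proof.
move=> hM hE x [s [hs g]]; exact: (gen_min hM (fun y hy => hE _ (hs _ hy)) g).
Qed.

Lemma ext_sub (K : fieldType) (R E : K -> Prop) :
  is_subring R -> ssub E (ext R E).
Proof.
move=> hR x Ex; exists [:: x]; split.
- by move=> y; rewrite mem_seq1 => /eqP ->.
- by apply: gen_in => //; rewrite mem_head.
Qed.

Lemma ext_gen (K : fieldType) (R E : K -> Prop) s :
  is_subring R -> (forall y, y \in s -> E y) -> ssub E (gen R s) ->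
  ext R E = gen R s.
Proof.
move=> hR hs hE; apply: sseq_eq => x; split.
- by apply: ext_min => //; apply: gen_mod.
- apply: gen_min; first exact: ext_mod.
  by move=> y hy; apply: ext_sub => //; apply: hs.
Qed.

Lemma fgmod_gen (K : fieldType) (R : K -> Prop) s :
  is_subring R -> (exists x, x != 0 /\ gen R s x) -> fgmod R (gen R s).
Proof.
move=> hR hx; split; first by split => //; apply: gen_mod.
by exists s.
Qed.

Lemma fgmod_ext (K : fieldType) (R R' F : K -> Prop) :
  is_subring R -> is_subring R' -> ssub R' R -> fgmod R' F -> fgmod R (ext R F).
Proof.
move=> hR hR' hsub [[_ [x [nx Fx]]] [s hs]].
have eF := sseq_eq hs; subst F.
rewrite (@ext_gen _ R _ s) //.
- by apply: fgmod_gen => //; exists x; split => //; apply: gen_mono Fx.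
- by move=> y hy; apply: gen_in.
- exact: gen_mono.
Qed.

Lemma fgmod_union (K : fieldType) (R R1 R2 A B : K -> Prop) :
  is_subring R -> is_subring R1 -> is_subring R2 -> ssub R1 R -> ssub R2 R ->
  fgmod R1 A -> fgmod R2 B -> fgmod R (ext R (fun x => A x \/ B x)).
Proof.
move=> hR hR1 hR2 h1 h2 [[_ [x [nx Ax]]] [s1 hs1]] [_ [s2 hs2]].
have eA := sseq_eq hs1; have eB := sseq_eq hs2; subst A B.
rewrite (@ext_gen _ R _ (s1 ++ s2)) //.
- apply: fgmod_gen => //; exists x; split => //.
  by apply: gen_catl => //; apply: gen_mono Ax.
- by move=> y; rewrite mem_cat => /orP [] hy; [left|right]; apply: gen_in.
- move=> y [] hy; [apply: gen_catl | apply: gen_catr] => //; exact: gen_mono hy.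
Qed.

Lemma gen_scale (K : fieldType) (R : K -> Prop) s x y :
  gen R (map (fun a => x * a) s) y <-> scale x (gen R s) y.
Proof.
elim: s y => [|a s IH] y /=; split.
- by move=> ->; exists 0; split => //; rewrite mulr0.
- by move=> [e [-> ->]]; rewrite mulr0.
- move=> [r [y' [Hr Hy' ->]]]; have [e [He ->]] := (IH y').1 Hy'.
  exists (r * a + e); split; [by exists r, e | ring].
- move=> [e [[r [y' [Hr Hy' ->]]] ->]].
  exists r, (x * y'); split => //; [by apply/IH; exists y' | ring].
Qed.

Lemma fgmod_scale (K : fieldType) (R F : K -> Prop) x :
  is_subring R -> x != 0 -> fgmod R F -> fgmod R (scale x F).
Proof.
move=> hR nx [[_ [e [ne Fe]]] [s hs]].
have eF := sseq_eq hs; subst F.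
have -> : scale x (gen R s) = gen R (map (fun a => x * a) s).
  by apply: sseq_eq => y; split => /gen_scale.
apply: fgmod_gen => //; exists (x * e); split; first by rewrite mulf_neq0.
by apply/gen_scale; exists e.
Qed.

Lemma scale_inv (K : fieldType) (E F : K -> Prop) x :
  x != 0 -> ssub F (scale x E) -> ssub (scale x^-1 F) E.
Proof.
move=> nx h y [f [Ff ->]]; have [e [Ee ->]] := h _ Ff.
by rewrite mulKf.
Qed.

Unset Implicit Arguments.

Theorem lemma3p5 (K : fieldType) (D : K -> Prop) (star : semistar_op K)
  (L : Type) (Tl : L -> K -> Prop) (stl : L -> semistar_op K) :
  is_subring D -> is_quotient_field D ->
  is_semistar D star ->
  inhabited L ->
  direct_family D Tl stl ->
  let T := union_ring Tl in
  let astL := star_Lambda Tl stl in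
  [/\ is_semistar T astL /\ finite_type T astL,
      (forall l, linked D star (Tl l) (stl l)) -> linked D star T astL &
      (forall l, linked D star (Tl l) (t_op (Tl l))) -> linked D star T (t_op T)].
Proof.
move=> hD hQ hstar [l0] [hover hsemi hdir hcomp] T astL.
have hTr : forall l, is_subring (Tl l) by move=> l; case: (hover l).
have hDTl : forall l, ssub D (Tl l) by move=> l; case: (hover l).
have hTlT : forall l, ssub (Tl l) T by move=> l x h; exists l.
have htrans : forall a b c : L, ssub (Tl a) (Tl b) -> ssub (Tl b) (Tl c) ->
   ssub (Tl a) (Tl c) by move=> a b c h1 h2 x hx; apply: h2; apply: h1.
have hT : is_subring T.
  split.
  - by exists l0; case: (hTr l0).
  - by exists l0; case: (hTr l0).
  - move=> x y [a ha] [b hb]; have [c [hac hbc]] := hdir a b; exists c.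
    by case: (hTr c) => _ _ hs _; apply: hs; [apply: hac | apply: hbc].
  - move=> x y [a ha] [b hb]; have [c [hac hbc]] := hdir a b; exists c.
    by case: (hTr c) => _ _ _ hm; apply: hm; [apply: hac | apply: hbc].
have hDT : ssub D T by move=> x hx; apply: (hTlT l0); apply: hDTl.
have hEmod : forall E l, Fbar T E -> is_module (Tl l) E.
  by move=> E l hE; apply: (module_mono (hTlT l)); case: hE.
have collectT : forall s : seq K, (forall y, y \in s -> T y) -> forall l,
    exists c, ssub (Tl l) (Tl c) /\ forall y, y \in s -> Tl c y.
  elim => [|a s IH] hs l; first by exists l; split => // y.
  have [c1 [h1 h2]] := IH (fun y hy => hs y ltac:(by rewrite in_cons hy orbT)) l.
  have [la ha] := hs a (mem_head a s).
  have [c [hc1 hca]] := hdir c1 la.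
  exists c; split; first exact: htrans h1 hc1.
  move=> y; rewrite in_cons => /orP [/eqP -> | hy]; [exact: hca | exact: hc1 (h2 _ hy)].
have lift : forall a c G H y, ssub (Tl a) (Tl c) -> fgmod (Tl a) G ->
    fgmod (Tl c) H -> ssub G H -> stl a G y -> stl c H y.
  move=> a c G H y hac hG hH hGH hy.
  have hy1 := hcomp a c G hac hG y hy.
  have [sF ssc smo sext sid] := hsemi c.
  apply: (smo _ _ _ hH.1 _ y hy1).
  - exact: (fgmod_ext (hTr c) (hTr a) hac hG).1.
  - by apply: ext_min hGH; case: hH => [[]].
have collect : forall E, Fbar T E -> forall s : seq K, (forall y, y \in s -> astL E y) ->
    forall l, exists c G, [/\ ssub (Tl l) (Tl c), fgmod (Tl c) G, ssub G E &
       forall y, y \in s -> stl c G y].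
  move=> E hE; elim => [|a s IH] hs l.
  - have [_ [x [nx Ex]]] := hE; exists l, (gen (Tl l) [:: x]); split => //.
    + by apply: fgmod_gen => //; exists x; split => //; apply: gen_in; rewrite ?mem_head.
    + apply: (gen_min (hEmod E l hE)) => y; rewrite mem_seq1 => /eqP -> //.
  - have [c1 [G1 [h1 hG1 hG1E hG1s]]] := IH (fun y hy => hs y ltac:(by rewrite in_cons hy orbT)) l.
    have [la [Fa [hFa hFaE hFaa]]] := hs a (mem_head a s).
    have [c [hc1 hca]] := hdir c1 la.
    have hG := fgmod_union (hTr c) (hTr c1) (hTr la) hc1 hca hG1 hFa.
    exists c, (ext (Tl c) (fun x => G1 x \/ Fa x)); split => //.
    + exact: htrans h1 hc1.
    + by apply: ext_min (hEmod E c hE) _ => x [] hx; [apply: hG1E | apply: hFaE].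
    + move=> y; rewrite in_cons => /orP [/eqP -> | hy].
      * apply: (lift la c Fa) => // x hx; apply: ext_sub => //; by right.
      * apply: (lift c1 c G1) => //; last exact: hG1s.
        move=> x hx; apply: ext_sub => //; by left.
have zero : forall E, Fbar T E -> astL E 0.
  move=> E hE; have [c [G [_ hG hGE _]]] := collect E hE [::] (fun _ h => False_ind _ (notF h)) l0.
  exists c, G; split => //.
  have [sF ssc smo sext sid] := hsemi c.
  by apply: sext; [exact: hG.1 | case: hG => [[[]]]].
have incl : forall E, Fbar T E -> ssub E (astL E).
  move=> E hE x Ex; case: (eqVneq x 0) => [-> | nx]; first exact: zero.
  have hg : fgmod (Tl l0) (gen (Tl l0) [:: x]).
    by apply: fgmod_gen => //; exists x; split => //; apply: gen_in; rewrite ?mem_head.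
  exists l0, (gen (Tl l0) [:: x]); split => //.
  + apply: (gen_min (hEmod E l0 hE)) => y; rewrite mem_seq1 => /eqP -> //.
  + have [sF ssc smo sext sid] := hsemi l0.
    by apply: sext; [exact: hg.1 | apply: gen_in; rewrite ?mem_head].
have Fbar_ast : forall E, Fbar T E -> Fbar T (astL E).
  move=> E hE; split; last first.
    by have [_ [x [nx Ex]]] := hE; exists x; split => //; exact: incl.
  split; first exact: zero.
  - move=> x y hx hy.
    have [c [G [_ hG hGE hGs]]] := collect E hE [:: x; y]
      (fun z hz => ltac:(move: hz; rewrite !in_cons in_nil orbF => /orP [/eqP -> | /eqP ->] //)) l0.
    exists c, G; split => //.
    have [sF ssc smo sext sid] := hsemi c.
    case: (sF G hG.1) => [[_ ha _] _]; apply: ha; apply: hGs;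
      by rewrite !in_cons eqxx ?orbT.
  - move=> r x [d hr] hx.
    have [c [G [hdc hG hGE hGs]]] := collect E hE [:: x]
      (fun z hz => ltac:(move: hz; rewrite mem_seq1 => /eqP -> //)) d.
    exists c, G; split => //.
    have [sF ssc smo sext sid] := hsemi c.
    case: (sF G hG.1) => [[_ _ hm] _]; apply: hm; first exact: hdc.
    by apply: hGs; rewrite mem_head.
have hsemiT : is_semistar T astL.
  split.
  - exact: Fbar_ast.
  - move=> x E nx hE y; split.
    + move=> [l [F [hF hFE hy]]].
      have [sF ssc smo sext sid] := hsemi l.
      have nxi : x^-1 != 0 by rewrite invr_eq0.
      have hF' := fgmod_scale (hTr l) nxi hF.
      have hy' : stl l (scale x^-1 F) (x^-1 * y).
        by apply: (ssc x^-1 F nxi hF.1 (x^-1 * y)).2; exists y.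
      exists (x^-1 * y); split; last by rewrite mulrA divff // mul1r.
      exists l, (scale x^-1 F); split => //; exact: scale_inv nx hFE.
    + move=> [e [[l [F [hF hFE he]]] ->]].
      have [sF ssc smo sext sid] := hsemi l.
      exists l, (scale x F); split.
      * exact: fgmod_scale (hTr l) nx hF.
      * by move=> z [f [Ff ->]]; exists f; split => //; apply: hFE.
      * by apply: (ssc x F nx hF.1 (x * e)).2; exists e.
  - move=> E F _ _ hEF y [l [G [hG hGE hy]]]; exists l, G; split => //.
    by move=> z hz; apply: hEF; apply: hGE.
  - exact: incl.
  - move=> E hE y; split; last by apply: incl; apply: Fbar_ast.
    move=> [l [F [hF hFA hy]]].
    have [_ [s hs]] := hF; have eF := sseq_eq hs; subst F.
    have [c [G [hlc hG hGE hGs]]] :=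
      collect E hE s (fun z hz => hFA z (gen_in (hTr l) hz)) l.
    have [sF ssc smo sext sid] := hsemi c.
    have hy' := hcomp l c _ hlc hF y hy.
    have hsub : ssub (ext (Tl c) (gen (Tl l) s)) (stl c G).
      apply: ext_min; first by case: (sF G hG.1).
      apply: gen_min; last exact: hGs.
      by apply: (module_mono hlc); case: (sF G hG.1).
    exists c, G; split => //.
    apply: (sid G hG.1 y).1.
    apply: (smo _ _ _ (sF G hG.1) hsub y hy').
    exact: (fgmod_ext (hTr c) (hTr l) hlc hF).1.
split.
- split => // E hE y; split.
  + move=> [l [F [hF hFE hy]]]; exists (ext T F); split.
    * exact: fgmod_ext hT (hTr l) (hTlT l) hF.
    * by apply: ext_min hFE; case: hE.
    * by exists l, F; split => //; apply: ext_sub.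
  + move=> [G [hG hGE [l [F [hF hFG hy]]]]]; exists l, F; split => //.
    by move=> z hz; apply: hGE; apply: hFG.
- move=> hlink F hF hFD hst y; split.
  + have [sF ssc smo sext sid] := hsemiT.
    apply: smo.
    * exact: (fgmod_ext hT hD hDT hF).1.
    * exact: sr_Fbar.
    * by apply: ext_min (sr_mod hT) _ => z h; apply: hDT; apply: hFD.
  + move=> [l [G [hG hGT hy]]].
    have [_ [s hs]] := hG; have eG := sseq_eq hs; subst G.
    have [c [hlc hsc]] := collectT s (fun z hz => hGT z (gen_in (hTr l) hz)) l.
    have hy1 := hcomp l c _ hlc hG y hy.
    have [sF ssc smo sext sid] := hsemi c.
    have hy2 : stl c (Tl c) y.
      apply: (smo _ _ _ (sr_Fbar (hTr c)) _ y hy1).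
      * exact: (fgmod_ext (hTr c) (hTr l) hlc hG).1.
      * apply: ext_min (sr_mod (hTr c)) _.
        exact: gen_min (module_mono hlc (sr_mod (hTr c))) hsc.
    have hy3 := (hlink c F hF hFD hst y).2 hy2.
    exists c, (ext (Tl c) F); split => //.
    * exact: fgmod_ext (hTr c) hD (hDTl c) hF.
    * apply: ext_min; first exact: (module_mono (hTlT c) (ext_mod F hT)).
      exact: ext_sub.
- move=> hlink F hF hFD hst.
  have claimA : forall l, ssub (colon (Tl l) (ext (Tl l) F)) (Tl l).
    move=> l z hz.
    have h1T : Tl l 1 by case: (hTr l).
    have h1 : t_op (Tl l) (Tl l) 1.
      exists (Tl l); split => //.
      * split; first exact: sr_Fbar.
        exists [:: 1] => x; split.
        - by move=> hx; exists x, 0; split => //; rewrite mulr1 addr0.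
        - apply: gen_min; first exact: sr_mod.
          by move=> w; rewrite mem_seq1 => /eqP ->.
      * move=> e he; rewrite mul1r; have := he 1 h1T; by rewrite mulr1.
    have [H [hH hHF hHv]] := (hlink l F hF hFD hst 1).2 h1.
    have := hHv z (fun e he => hz e (hHF e he)); by rewrite mul1r.
  have claimB : ssub (colon T (ext T F)) T.
    move=> z hz.
    have [_ [s hs]] := hF; have eF := sseq_eq hs; subst F.
    have [c [_ hc]] := collectT (map (fun a => z * a) s)
      (fun w hw => ltac:(move/mapP: hw => [a ha ->]; apply: hz;
          apply: ext_sub => //; exact: gen_in ha)) l0.
    apply: (hTlT c); apply: (claimA c) => e he.
    have he' : gen (Tl c) s e.
      apply: (ext_min (gen_mod s (hTr c))) he.
      exact: gen_mono (hDTl c).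
    apply: (gen_min (zcolon_mod z (hTr c))) he'.
    by move=> a ha; apply: hc; apply: map_f.
  move=> y; split.
  + move=> [G [hG hGE hv]]; exists G; split => // z hz.
    by apply: (ext_min (sr_mod hT)) (hGE z hz) => w h; apply: hDT; apply: hFD.
  + move=> [G [hG hGT hv]]; exists (ext T F); split => //.
    * exact: fgmod_ext hT hD hDT hF.
    * move=> e he; have eT := claimB e he.
      have yT : T y.
        have := hv 1 (fun g hg => ltac:(rewrite mul1r; exact: hGT g hg)).
        by rewrite mulr1.
      by case: hT => _ _ _ hm; apply: hm.
Qed.
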